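(* Let $G$ be a complete edge-colored graph with vertex set $V$, and for every strong module $M$ of $G$ let $\ell^M$ be a labeling of the quotient graph $G[M]/\mathbb{P}_{\max}(M)$. Define the relation $\prec$ on $V$ by: for distinct $u,v\in V$, $u\prec v$ iff $\ell^{M^{u,v}}(M^{u,v}_u)<\ell^{M^{u,v}}(M^{u,v}_v)$. Then $\prec$ is a strict total order on $V$, and consequently the map $\ell_\prec:V\to\{1,\dots,|V|\}$ with $\ell_\prec(u)<\ell_\prec(v)\iff u\prec v$ is a labeling of $G$.
   Context: A complete edge-colored graph is a complete graph on a finite set $V$ with edges partitioned into nonempty color classes. A module is a set $M\subseteq V$ such that for every $v\notin M$ all edges $\{u,v\}$, $u\in M$, have the same color; a strong module is a nonempty module that is comparable by inclusion or disjoint with every other module. The strong modules form a hierarchy (tree) containing $V$ and all singletons. For a strong module $M$ with $|M|\ge2$, $\mathbb{P}_{\max}(M)$ is the set of inclusion-maximal strong modules properly contained in $M$ (a partition of $M$), and $G[M]/\mathbb{P}_{\max}(M)$ is the complete graph on $\mathbb{P}_{\max}(M)$ in which $\{M_a,M_b\}$ has the common color of all edges between $M_a$ and $M_b$; for $|M|=1$ it is the one-vertex graph. A labeling of a graph with vertex set $W$ is a bijection $W\to\{1,\dots,|W|\}$. For distinct $u,v\in V$, $M^{u,v}$ is the inclusion-minimal strong module containing $u$ and $v$, and $M^{u,v}_u,M^{u,v}_v\in\mathbb{P}_{\max}(M^{u,v})$ are the (distinct) members containing $u$ and $v$, respectively. A strict total order is an irreflexive, transitive relation in which any two distinct elements are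 comparable. *)

(* Defs.v *)
From mathcomp Require Import all_boot.
Set Implicit Arguments. Unset Strict Implicit. Unset Printing Implicit Defensive.

Section Modules.
Variables (T : finType) (C : eqType) (col : T -> T -> C).

Definition is_module (M : {set T}) : bool :=
  [forall v, (v \notin M) ==>
     [forall u in M, [forall u' in M, col u v == col u' v]]].

Definition strong_module (M : {set T}) : bool :=
  [&& M != set0, is_module M &
      [forall N : {set T}, is_module N ==>
         [|| N \subset M, M \subset N | [disjoint M & N]]]].

Definition Pmax (M : {set T}) : {set {set T}} :=
  [set N : {set T} | strong_module N && (N \proper M) &&
     [forall N' : {set T}, (strong_module N' && (N' \proper M)) ==>
        (N \subset N') ==> (N' == N)]].

(* vertex set of the quotient graph G[M]/P_max(M); one vertex if |M| = 1 *)
Definition qverts (M : {set T}) : {set {set T}} :=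
  if 2 <= #|M| then Pmax M else [set M].

Definition is_labeling (W : {set {set T}}) (l : {set T} -> nat) : Prop :=
  {in W &, injective l} /\ (forall N, N \in W -> 1 <= l N <= #|W|).

Definition min_strong (u v : T) (M : {set T}) : bool :=
  [&& strong_module M, u \in M, v \in M &
      [forall N : {set T}, [&& strong_module N, u \in N & v \in N] ==>
         (M \subset N)]].

Definition prec (lab : {set T} -> {set T} -> nat) (u v : T) : bool :=
  (u != v) &&
  [exists M : {set T}, exists Mu : {set T}, exists Mv : {set T},
     [&& min_strong u v M, Mu \in Pmax M, Mv \in Pmax M, u \in Mu, v \in Mv &
         lab M Mu < lab M Mv]].

End Modules.

(* Main.v *)
Require Import Defs.
From mathcomp Require Import all_boot.
Set Implicit Arguments. Unset Strict Implicit.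

Section Aux.
Variables (T : finType) (C : eqType) (col : T -> T -> C).
Local Notation strong := (strong_module col).
Local Notation Pm := (Pmax col).

Lemma strong_setT (x : T) : strong setT.
Proof.
apply/and3P; split.
- by apply/set0Pn; exists x; rewrite in_setT.
- by apply/forallP=> v; rewrite in_setT.
- by apply/forallP=> N; rewrite subsetT implybT.
Qed.

Lemma strong_set1 (x : T) : strong [set x].
Proof.
apply/and3P; split.
- by apply/set0Pn; exists x; rewrite set11.
- apply/forallP=> v; apply/implyP=> _; apply/forallP=> u; apply/implyP.
  rewrite in_set1 => /eqP->; apply/forallP=> u'; apply/implyP.
  by rewrite in_set1 => /eqP->.
- apply/forallP=> N; apply/implyP=> _.
  case: (boolP (x \in N)) => xN; first by rewrite sub1set xN orbT.
  by apply/or3P; apply: Or33; rewrite disjoints1.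
Qed.

Lemma strong_mod M : strong M -> is_module col M.
Proof. by case/and3P. Qed.

Lemma strong_overlap M N x : strong M -> strong N -> x \in M -> x \in N ->
  (N \subset M) || (M \subset N).
Proof.
move=> sM sN xM xN.
case/and3P: (sM) => _ _ /forallP/(_ N).
rewrite (strong_mod sN) /= => /or3P [->|->|dis] //; first by rewrite orbT.
by rewrite (disjointFr dis xM) in xN.
Qed.

Lemma inPmax P M : P \in Pm M -> [/\ strong P, P \proper M &
  forall N, strong N -> N \proper M -> P \subset N -> N = P].
Proof.
rewrite inE => /andP[/andP[sP pP] /forallP H]; split=> // N sN pN PN.
by apply/eqP; move/(_ N): H; rewrite sN pN PN.
Qed.

Lemma pmax_above P M N x : P \in Pm M -> strong N -> N \proper M ->
  x \in P -> x \in N -> N \subset P.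
Proof.
case/inPmax => sP pP mx sN pN xP xN.
case/orP: (strong_overlap sP sN xP xN) => // PN.
by rewrite (mx N sN pN PN).
Qed.

Lemma pmax_uniq P Q M x : P \in Pm M -> Q \in Pm M -> x \in P -> x \in Q -> P = Q.
Proof.
move=> PM QM xP xQ.
have [sP pP _] := inPmax PM; have [sQ pQ _] := inPmax QM.
by apply/eqP; rewrite eqEsubset (pmax_above QM sP pP xQ xP) (pmax_above PM sQ pQ xP xQ).
Qed.

Lemma minsP u v M : min_strong col u v M -> [/\ strong M, u \in M, v \in M &
  forall N, strong N -> u \in N -> v \in N -> M \subset N].
Proof.
case/and4P=> sM uM vM /forallP H; split=> // N sN uN vN.
by move/(_ N): H; rewrite sN uN vN.
Qed.

Lemma minsP' u v M : [/\ strong M, u \in M, v \in M &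
  forall N, strong N -> u \in N -> v \in N -> M \subset N] -> min_strong col u v M.
Proof.
case=> sM uM vM H; apply/and4P; split=> //.
by apply/forallP=> N; apply/implyP=> /and3P[]; exact: H.
Qed.

Lemma mins_sym u v M : min_strong col u v M -> min_strong col v u M.
Proof.
case/minsP=> sM uM vM H; apply/minsP'; split=> // N sN vN uN; exact: H.
Qed.

Lemma mins_not_same u v M P : min_strong col u v M -> P \in Pm M ->
  u \in P -> v \in P -> False.
Proof.
case/minsP => _ _ _ H PM uP vP. have [sP pP _] := inPmax PM.
have := proper_sub_trans pP (H P sP uP vP). by rewrite properxx.
Qed.

Lemma mins_char u v M P Q : strong M -> u \in M -> v \in M ->
  P \in Pm M -> Q \in Pm M -> u \in P -> v \in Q -> P != Q -> min_strong col u v M.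
Proof.
move=> sM uM vM PM QM uP vQ nPQ; apply/minsP'; split=> // N sN uN vN.
case/orP: (strong_overlap sM sN uM uN) => // NM.
case: (boolP (N == M)) => [/eqP-> |nNM]; first exact: subxx.
have pN : N \proper M by rewrite properEneq nNM NM.
have NP := pmax_above PM sN pN uP uN.
have vP := subsetP NP v vN.
by rewrite (pmax_uniq PM QM vP vQ) eqxx in nPQ.
Qed.

Lemma exists_mins u v : exists M, min_strong col u v M.
Proof.
pose p := fun N => [&& strong N, u \in N & v \in N].
have p0 : p setT by rewrite /p (strong_setT u) !in_setT.
case: (arg_minnP (fun N : {set T} => #|N|) p0) => M /and3P[sM uM vM] minM.
exists M; apply/minsP'; split=> // N sN uN vN.
case/orP: (strong_overlap sM sN uM uN) => // NM.
have := minM N; rewrite /p sN uN vN => /(_ isT) le.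
have /eqP <- : N == M by rewrite eqEcard NM le.
exact: subxx.
Qed.

Lemma part_exists (M : {set T}) (x : T) : x \in M -> 2 <= #|M| -> exists2 P : {set T}, P \in Pm M & x \in P.
Proof.
move=> xM cM.
pose p := fun N => strong N && (N \proper M) && (x \in N).
have p0 : p [set x].
  by rewrite /p strong_set1 set11 andbT /= properEcard sub1set xM cards1.
case: (arg_maxnP (fun N : {set T} => #|N|) p0) => P /andP[/andP[sP pP] xP] maxP.
exists P => //. rewrite inE sP pP /=; apply/forallP=> N; apply/implyP=> /andP[sN pN].
apply/implyP=> PN.
have := maxP N; rewrite /p sN pN (subsetP PN x xP) => /(_ isT) le.
by rewrite eq_sym eqEcard PN; exact: le.
Qed.

End Aux.

Theorem lemma4p6 (T : finType) (C : eqType) (col : T -> T -> C)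
  (col_sym : forall u v : T, u != v -> col u v = col v u)
  (lab : {set T} -> {set T} -> nat)
  (lab_ok : forall M : {set T}, strong_module col M ->
              is_labeling (qverts col M) (lab M)) :
  (* ≺ is a strict total order on V *)
  ((forall u : T, ~~ prec col lab u u) /\
   (forall u v w : T, prec col lab u v -> prec col lab v w -> prec col lab u w) /\
   (forall u v : T, u != v -> prec col lab u v \/ prec col lab v u)) /\
  (* the induced labeling l_≺ of G *)
  (exists l : T -> nat,
     injective l /\ (forall u, 1 <= l u <= #|T|) /\
     (forall u v : T, l u < l v <-> prec col lab u v)).
Proof.
have precP : forall u v, prec col lab u v -> u != v /\ exists M Mu Mv,
    min_strong col u v M /\ [/\ Mu \in Pmax col M, Mv \in Pmax col M, u \in Mu,
     v \in Mv & lab M Mu < lab M Mv].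
  move=> u v /andP[uv /existsP[M /existsP[Mu /existsP[Mv /andP[m /and5P[a b c d e]]]]]].
  by split=> //; exists M, Mu, Mv.
have precI : forall u v M Mu Mv, u != v -> min_strong col u v M ->
    Mu \in Pmax col M -> Mv \in Pmax col M -> u \in Mu -> v \in Mv ->
    lab M Mu < lab M Mv -> prec col lab u v.
  move=> u v M Mu Mv uv m a b c d e; rewrite /prec uv /=.
  apply/existsP; exists M; apply/existsP; exists Mu; apply/existsP; exists Mv.
  by rewrite m a b c d e.
have irr : forall u, ~~ prec col lab u u by move=> u; rewrite /prec eqxx.
have trans : forall u v w, prec col lab u v -> prec col lab v w -> prec col lab u w.
  move=> u v w /precP[uv [A [Au [Av [mA [AuP AvP uAu vAv lA]]]]]].
  move=> /precP[vw [B [Bv [Bw [mB [BvP BwP vBv wBw lB]]]]]].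
  have [sA uA vA minA] := minsP mA; have [sB vB wB minB] := minsP mB.
  case: (boolP (A == B)) => [/eqP eAB | nAB].
    subst B. have eV := pmax_uniq AvP BvP vAv vBv. subst Bv.
    have nAuw : Au != Bw.
      by apply/eqP=> e; subst Bw; move: (ltn_trans lA lB); rewrite ltnn.
    have uw : u != w.
      by apply/eqP=> e; subst w; rewrite (pmax_uniq AuP BwP uAu wBw) eqxx in nAuw.
    apply: (precI u w A Au Bw) => //; first exact: (mins_char sA uA wB AuP BwP).
    exact: ltn_trans lA lB.
  case/orP: (strong_overlap sA sB vA vB) => [BA | AB].
  - have pB : B \proper A by rewrite properEneq eq_sym nAB BA.
    have BAv := pmax_above AvP sB pB vAv vB.
    have wAv := subsetP BAv w wB.
    have uAv : u \notin Av by apply/negP=> h; exact: (mins_not_same mA AvP h vAv).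
    have uw : u != w by apply/eqP=> e; subst w; rewrite wAv in uAv.
    have nAuv : Au != Av by apply/eqP=> e; subst Av; rewrite uAu in uAv.
    apply: (precI u w A Au Av) => //.
    exact: (mins_char sA uA (subsetP BA w wB) AuP AvP).
  - have pA : A \proper B by rewrite properEneq nAB AB.
    have ABv := pmax_above BvP sA pA vBv vA.
    have uBv := subsetP ABv u uA.
    have wBv : w \notin Bv by apply/negP=> h; exact: (mins_not_same mB BvP vBv h).
    have uw : u != w by apply/eqP=> e; subst w; rewrite uBv in wBv.
    have nBvw : Bv != Bw by apply/eqP=> e; subst Bw; rewrite wBw in wBv.
    apply: (precI u w B Bv Bw) => //.
    exact: (mins_char sB (subsetP AB u uA) wB BvP BwP).
have tot : forall u v, u != v -> prec col lab u v \/ prec col lab v u.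
  move=> u v uv. have [M mM] := exists_mins col u v.
  have [sM uM vM _] := minsP mM.
  have c2 : 2 <= #|M|.
    have : [set u; v] \subset M by rewrite subUset !sub1set uM vM.
    by move/subset_leq_card; rewrite cards2 uv.
  have [P PM uP] := part_exists col uM c2; have [Q QM vQ] := part_exists col vM c2.
  have nPQ : P != Q by apply/eqP=> e; subst Q; exact: (mins_not_same mM PM uP vQ).
  have [inj _] := lab_ok M sM; rewrite /qverts c2 in inj.
  case: (ltngtP (lab M P) (lab M Q)) => h.
  - by left; exact: (precI u v M P Q).
  - by right; apply: (precI v u M Q P) => //; [rewrite eq_sym | exact: mins_sym].
  - by rewrite (inj _ _ PM QM h) eqxx in nPQ.
split; first by split=> //; split.
pose l u := #|[set x | prec col lab x u]|.+1.
have ltl : forall u v, prec col lab u v -> l u < l v.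
  move=> u v h; rewrite ltnS; apply: proper_card; apply/properP; split.
    by apply/subsetP=> x; rewrite !inE => hx; exact: trans hx h.
  by exists u; rewrite inE ?h // irr.
exists l; split; last split.
- move=> u v e; apply/eqP; apply/negPn/negP=> uv.
  by case: (tot u v uv) => /ltl; rewrite e ltnn.
- move=> u; rewrite /l ltnS /=. rewrite -(cardsT T).
  apply: proper_card; rewrite properT; apply/eqP=> e.
  have : u \in [set x | prec col lab x u] by rewrite e in_setT.
  by rewrite inE (negbTE (irr u)).
- move=> u v; split; last exact: ltl.
  move=> h; case: (boolP (u == v)) => [/eqP e | uv]; first by subst; rewrite ltnn in h.
  case: (tot u v uv) => // /ltl h'.
  by move: (ltn_trans h h'); rewrite ltnn.
Qed.
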